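(* There exists a constant $c>0$ not depending on $n$ such that $\theta_n(B_n)>c\sqrt n$ for all $n\in\mathbb{N}$. In particular this holds with $$c=\frac{\sqrt[3]{\pi}}{\sqrt{12e}\cdot\sqrt[6]{3}}=0.2135\ldots$$
   Context: $B_n=\{x\in\mathbb{R}^n:\|x\|\le1\}$ (Euclidean norm). $C(B_n)$ is the space of continuous real functions on $B_n$ with the max norm; $\Pi_1(\mathbb{R}^n)$ is the set of polynomials in $n$ variables of degree at most $1$. For a nondegenerate simplex $S\subset B_n$ with vertices $x^{(1)},\dots,x^{(n+1)}$, the corresponding interpolation projector $P:C(B_n)\to\Pi_1(\mathbb{R}^n)$ is defined by $Pf(x^{(j)})=f(x^{(j)})$, and $\|P\|_{B_n}$ is its operator norm on $C(B_n)$ (equivalently $\max_{x\in B_n}\sum_j|\lambda_j(x)|$ with $\lambda_j(x)$ the barycentric coordinates of $x$ with respect to $S$). $\theta_n(B_n)$ is the minimal value of $\|P\|_{B_n}$ over all nondegenerate simplices with vertices in $B_n$. *)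

(* Defs.v *)
From HB Require Import structures.
From mathcomp Require Import all_boot all_order all_algebra.
From mathcomp Require Import all_classical all_reals all_analysis.
Set Implicit Arguments. Unset Strict Implicit. Unset Printing Implicit Defensive.
Import Order.TTheory GRing.Theory Num.Theory.
Local Open Scope classical_set_scope.
Local Open Scope ring_scope.

Section Defs.
Variable R : realType.

Definition in_ball (n : nat) (x : 'rV[R]_n) : Prop :=
  \sum_(i < n) (x ord0 i) ^+ 2 <= 1.

Definition is_bary (n : nat) (S : 'I_n.+1 -> 'rV[R]_n) (x : 'rV[R]_n)
    (l : 'I_n.+1 -> R) : Prop :=
  \sum_(j < n.+1) l j = 1 /\ \sum_(j < n.+1) l j *: S j = x.

Definition nondegenerate (n : nat) (S : 'I_n.+1 -> 'rV[R]_n) : Prop :=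
  forall mu : 'I_n.+1 -> R,
    \sum_(j < n.+1) mu j = 0 -> \sum_(j < n.+1) mu j *: S j = 0 ->
    forall j, mu j = 0.

Definition proj_norm (n : nat) (S : 'I_n.+1 -> 'rV[R]_n) : R :=
  sup [set s : R | exists (x : 'rV[R]_n) (l : 'I_n.+1 -> R),
         in_ball x /\ is_bary S x l /\ s = \sum_(j < n.+1) `|l j|].

Definition theta (n : nat) : R :=
  inf [set p : R | exists S : 'I_n.+1 -> 'rV[R]_n,
         (forall j, in_ball (S j)) /\ nondegenerate S /\ p = proj_norm S].

Definition c_const : R :=
  pi `^ (3^-1) / (Num.sqrt (12 * expR 1) * 3 `^ (6^-1)).

End Defs.

(* Main.v *)
Require Import Defs.
From HB Require Import structures.
From mathcomp Require Import all_boot all_order all_algebra.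
From mathcomp Require Import all_classical all_reals all_analysis.
From mathcomp Require Import ring lra.
Import Order.TTheory GRing.Theory Num.Theory.
Local Open Scope ring_scope.

Lemma greedy (R : realType) n (a : nat -> 'I_n -> R) m : exists e : nat -> R,
  (forall k, e k = 1 \/ e k = -1) /\
  \sum_(k < m) \sum_i a k i ^+ 2 <= \sum_i (\sum_(k < m) e k * a k i) ^+ 2.
Proof.
elim: m => [|m [e [he hs]]].
  exists (fun _ => 1); split; first by left.
  by rewrite big_ord0; apply: sumr_ge0 => i _; exact: sqr_ge0.
pose v i := \sum_(k < m) e k * a k i.
pose d := \sum_i v i * a m i.
pose s : R := if 0 <= d then 1 else -1.
have hs2 : s ^+ 2 = 1 by rewrite /s; case: ifP => _; rewrite ?expr1n ?sqrrN ?expr1n.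
have hsd : 0 <= s * d by rewrite /s; case: ifP => h; [rewrite mul1r | rewrite mulN1r oppr_ge0; rewrite leNgt in h; move/negbFE: h => /ltW].
exists (fun k => if k == m then s else e k); split.
  move=> k; case: eqP => _ //; rewrite /s; case: ifP => _; by [left | right].
have hv : forall i, \sum_(k < m.+1) (if (k : nat) == m then s else e k) * a k i = v i + s * a m i.
  move=> i; rewrite big_ord_recr /= eqxx; congr (_ + _).
  by apply: eq_bigr => k _; rewrite (ltn_eqF (ltn_ord k)).
have E : \sum_i (\sum_(k < m.+1) (if (k:nat) == m then s else e k) * a k i) ^+ 2 = \sum_i (v i + s * a m i) ^+ 2.
  by apply: eq_bigr => i _; rewrite hv.
apply: (le_trans (_ : _ <= \sum_i (v i + s * a m i) ^+ 2)); last by rewrite -E; apply: lexx.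
have -> : \sum_i (v i + s * a m i) ^+ 2 =
   \sum_i v i ^+ 2 + \sum_i a m i ^+ 2 + 2 * s * d.
  rewrite /d mulr_sumr -!big_split /=; apply: eq_bigr => i _.
  rewrite sqrrD exprMn hs2 mul1r; ring.
rewrite big_ord_recr /=.
move: hs; rewrite -/v => hs.
lra.
Qed.

Section Main.
Variable R : realType.
Variable n : nat.
Variable S : 'I_n.+1 -> 'rV[R]_n.

Definition Mx : 'M[R]_(n.+1) := row_mx (const_mx 1 : 'M[R]_(n.+1, 1)) (\matrix_(j < n.+1) S j).

Lemma mulMx (u : 'rV[R]_n.+1) :
  u *m Mx = row_mx (u *m (const_mx 1 : 'M[R]_(n.+1,1))) (\sum_j u 0 j *: S j) :> 'rV[R]_(1 + n).
Proof.
apply: (etrans (mul_mx_row u _ _)).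
congr row_mx; rewrite mulmx_sum_row; apply: eq_bigr => j _; by rewrite rowK.
Qed.

Lemma sum_const (u : 'rV[R]_n.+1) : (u *m (const_mx 1 : 'M[R]_(n.+1,1))) 0 0 = \sum_j u 0 j.
Proof. by rewrite mxE; apply: eq_bigr => j _; rewrite mxE mulr1. Qed.

Lemma Mx_unit : Defs.nondegenerate S -> Mx \in unitmx.
Proof.
move=> nd; rewrite -row_free_unit -kermx_eq0; apply/eqP/matrixP => i k.
have h0 := mulmx_ker Mx.
have h1 : row i (kermx Mx) *m Mx = 0 by rewrite -row_mul h0; apply/matrixP=> a b; rewrite !mxE.
move: h1; rewrite mulMx => h1.
have e0 : (0 : 'rV[R]_(n.+1)) = row_mx (0 : 'M[R]_(1,1)) (0 : 'rV[R]_n).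
  by apply/matrixP=> a b; rewrite !mxE; case: splitP => *; rewrite mxE.
have [h2 h3] := @eq_row_mx _ 1 1 n _ _ 0 0 (etrans h1 e0).
have := nd (fun j => row i (kermx Mx) 0 j).
rewrite -sum_const h2 mxE => /(_ erefl h3 k).
by rewrite !mxE.
Qed.

Definition N := invmx Mx.
Definition lam (x : 'rV[R]_n) : 'rV[R]_n.+1 := row_mx (1 : 'M[R]_1) x *m N.

Lemma lam_bary x : Defs.nondegenerate S -> is_bary S x (fun j => lam x 0 j).
Proof.
move=> nd; have hu := Mx_unit nd.
have : lam x *m Mx = row_mx 1 x by rewrite /lam /N mulmxKV.
rewrite mulMx => /(@eq_row_mx _ 1 1 n)[h1 h2]; split => //.
by rewrite -sum_const h1 mxE.
Qed.

Lemma bary_uniq x l : Defs.nondegenerate S -> is_bary S x l -> forall j, l j = lam x 0 j.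
Proof.
move=> nd [h1 h2] j; have hu := Mx_unit nd.
have e : (\row_j l j) *m Mx = row_mx 1 x :> 'rV[R]_(1 + n).
  rewrite mulMx; congr row_mx.
    apply/matrixP => a b; rewrite !ord1 sum_const mxE -h1.
    by apply: eq_bigr => k _; rewrite mxE.
  by rewrite -h2; apply: eq_bigr => k _; rewrite mxE.
by rewrite /lam -e /N mulmxK // mxE.
Qed.

Definition B0 : 'M[R]_(1, n.+1) := usubmx (N : 'M[R]_(1 + n, n.+1)).
Definition A : 'M[R]_(n, n.+1) := dsubmx (N : 'M[R]_(1 + n, n.+1)).

Lemma lamE x j : lam x 0 j = B0 0 j + \sum_i x 0 i * A i j.
Proof.
rewrite /lam.
have -> : N = col_mx B0 A by rewrite vsubmxK.
by rewrite mul_row_col mul1mx !mxE.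
Qed.

Lemma lam_vert k j : Defs.nondegenerate S -> lam (S k) 0 j = (j == k)%:R.
Proof.
move=> nd; symmetry; apply: (@bary_uniq _ (fun j => (j == k)%:R) nd).
split.
  by rewrite (bigD1 k) //= eqxx big1 ?addr0 // => i /negPf ->.
by rewrite (bigD1 k) //= eqxx scale1r big1 ?addr0 // => i /negPf ->; rewrite scale0r.
Qed.



Lemma col_bound (n1 : (0 < n)%N) : Defs.nondegenerate S -> (forall j, in_ball (S j)) ->
  forall j, 1 / 4 <= \sum_i A i j ^+ 2.
Proof.
move=> nd ball j.
pose k := lift j (Ordinal n1).
have hjk : (j == k) = false by apply/negbTE/neq_lift.
have h1 : lam (S j) 0 j - lam (S k) 0 j = 1 by rewrite !lam_vert // eqxx hjk subr0.
have h2 : \sum_i (S j 0 i - S k 0 i) * A i j = 1.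
  rewrite -h1 !lamE opprD addrACA subrr add0r -sumrB.
  by apply: eq_bigr => i _; rewrite mulrBl.
have h3 : \sum_i (S j 0 i - S k 0 i) ^+ 2 <= 4.
  apply: (le_trans (_ : _ <= \sum_i (2 * S j 0 i ^+ 2 + 2 * S k 0 i ^+ 2))).
    apply: ler_sum => i _; have := sqr_ge0 (S j 0 i + S k 0 i); nra.
  rewrite big_split /= -!mulr_sumr.
  have := ball j; have := ball k; rewrite /in_ball => bk bj.
  lra.
have h4 : \sum_i (S j 0 i - S k 0 i) * A i j <=
   \sum_i ((S j 0 i - S k 0 i) ^+ 2 / 8 + 2 * A i j ^+ 2).
  apply: ler_sum => i _; have := sqr_ge0 (A i j - (S j 0 i - S k 0 i) / 4); nra.
move: h4; rewrite big_split /= -mulr_suml -mulr_sumr h2.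
lra.
Qed.

Lemma main_bound (n1 : (0 < n)%N) : Defs.nondegenerate S -> (forall j, in_ball (S j)) ->
  exists x l, in_ball x /\ is_bary S x l /\
     Num.sqrt (n.+1%:R) / 2 <= \sum_j `|l j|.
Proof.
move=> nd ball.
have [e [he hs]] := @greedy R n (fun k i => A i (inord k)) n.+1.
pose v i := \sum_(k < n.+1) e k * A i k.
pose V := \sum_i v i ^+ 2.
have hV : n.+1%:R / 4 <= V.
  have E1 : \sum_(k < n.+1) \sum_i A i (inord k) ^+ 2 = \sum_(k < n.+1) \sum_i A i k ^+ 2.
    by apply: eq_bigr => k _; rewrite inord_val.
  have E2 : \sum_i (\sum_(k < n.+1) e k * A i (inord k)) ^+ 2 = V.
    by apply: eq_bigr => i _; congr (_ ^+ 2); apply: eq_bigr => k _; rewrite inord_val.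
  move: hs; rewrite E1 E2 => hs; apply: le_trans hs.
  apply: (le_trans _ (ler_sum _ (fun k _ => col_bound n1 nd ball k))).
  rewrite sumr_const card_ord -mulr_natr; lra.
have V0 : 0 < V by apply: lt_le_trans hV; rewrite divr_gt0 // ltr0n.
pose r := Num.sqrt V.
have r0 : 0 < r by rewrite sqrtr_gt0.
have rr : r * r = V by rewrite -expr2 sqr_sqrtr // ltW.
pose beta := \sum_(j < n.+1) e j * B0 0 j.
pose s : R := if 0 <= beta then 1 else -1.
have s2 : s * s = 1 by rewrite /s; case: ifP => _; rewrite ?mulr1 ?mulrNN ?mulr1.
pose t := s / r.
pose x : 'rV[R]_n := \row_i (t * v i).
exists x, (fun j => lam x 0 j); split; last split.
- rewrite /in_ball; under eq_bigr do rewrite mxE exprMn.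
  rewrite -mulr_sumr -/V /t exprMn expr2 s2 mul1r -rr.
  by rewrite exprVn expr2 mulVf // mulf_neq0 // gt_eqF.
- exact: lam_bary.
have hsum : \sum_(j < n.+1) e j * lam x 0 j = beta + s * r.
  have -> : s * r = t * V by rewrite /t -rr mulrA divfK // gt_eqF.
  under eq_bigr do rewrite lamE mulrDr.
  rewrite big_split /=; congr (_ + _).
  have -> : V = \sum_i v i * \sum_(j < n.+1) e j * A i j.
    by apply: eq_bigr => i _; rewrite expr2.
  rewrite mulr_sumr; under eq_bigr do rewrite mulr_sumr.
  rewrite exchange_big /=; apply: eq_bigr => i _; rewrite mulr_sumr.
  rewrite mulr_sumr; apply: eq_bigr => j _; rewrite mxE; ring.
have hn : forall j : 'I_n.+1, `|e j * lam x 0 j| = `|lam x 0 j|.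
  by move=> j; rewrite normrM; case: (he j) => ->; rewrite ?normrN normr1 mul1r.
have hr : Num.sqrt (n.+1%:R : R) / 2 <= r.
  have a0 : 0 <= Num.sqrt (n.+1%:R : R) / 2 by apply: mulr_ge0; [exact: sqrtr_ge0 | rewrite invr_ge0; lra].
  have a2 : (Num.sqrt (n.+1%:R : R) / 2) ^+ 2 <= r ^+ 2.
    rewrite exprMn sqr_sqrtr ?ler0n // [r ^+ 2]expr2 rr.
    by apply: le_trans hV; rewrite expr2; lra.
  have := ltW r0; nra.
have hb : r <= `|beta + s * r|.
  rewrite /s; case: ifP => hb0.
    by rewrite mul1r ger0_norm; lra.
  move/negbT: hb0; rewrite -ltNge => hb0.
  by rewrite mulN1r ler0_norm; lra.
apply: (le_trans hr); apply: (le_trans hb); rewrite -hsum.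
apply: (le_trans (ler_norm_sum _ _ _)).
by under eq_bigr do rewrite hn.
Qed.

Lemma coord_le1 (x : 'rV[R]_n) i : in_ball x -> `|x 0 i| <= 1.
Proof.
move=> hb; have h : x 0 i ^+ 2 <= 1.
  apply: le_trans hb; rewrite (bigD1 i) //= lerDl.
  by apply: sumr_ge0 => *; exact: sqr_ge0.
by move: h; rewrite -real_normK ?num_real // expr_le1.
Qed.

Lemma proj_ge (n1 : (0 < n)%N) : Defs.nondegenerate S -> (forall j, in_ball (S j)) ->
  Num.sqrt (n.+1%:R : R) / 2 <= proj_norm S.
Proof.
move=> nd ball.
have [x [l [hb [hl hbd]]]] := main_bound n1 nd ball.
apply: (le_trans hbd); rewrite /proj_norm; apply: ub_le_sup.
- exists (\sum_j (`|B0 0 j| + \sum_i `|A i j|)).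
  move=> y [x' [l' [hb' [hl' ->]]]].
  apply: ler_sum => j _; rewrite (bary_uniq _ _ nd hl') lamE.
  apply: (le_trans (ler_normD _ _)); rewrite lerD2l.
  apply: (le_trans (ler_norm_sum _ _ _)); apply: ler_sum => i _.
  by rewrite normrM ler_piMl ?normr_ge0 ?coord_le1.
- by exists x, l.
Qed.
End Main.

Definition S0 (R : realType) n : 'I_n.+1 -> 'rV[R]_n :=
  fun j => \row_i ((val j == i.+1)%N%:R).

Lemma S0_ball (R : realType) n j : in_ball (@S0 R n j).
Proof.
rewrite /in_ball; under eq_bigr do rewrite mxE.
case: (unliftP ord0 j) => [i ->|->].
  rewrite (bigD1 i) //= big1 => [|i' hi'].
    by rewrite (_ : bump 0 i = i.+1) // eqxx expr1n addr0.
  by move: hi'; rewrite -val_eqE => /negPf hi'; rewrite (_ : bump 0 i = i.+1) // eqSS eq_sym hi' expr2 mul0r.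
by rewrite big1 // => i _; rewrite expr2 mul0r.
Qed.

Lemma S0_nd (R : realType) n : Defs.nondegenerate (@S0 R n).
Proof.
move=> mu h1 h2.
have hl : forall i : 'I_n, mu (lift ord0 i) = 0.
  move=> i; have := congr1 (fun M : 'rV[R]_n => M 0 i) h2.
  rewrite summxE mxE big_ord_recl /= !mxE /= mulr0 add0r.
  rewrite (bigD1 i) //= big1 => [|i' hi'].
    by rewrite !mxE (_ : val (lift ord0 i) = i.+1) // eqxx mulr1 addr0.
  by move: hi'; rewrite -val_eqE => /negPf hi'; rewrite !mxE (_ : val (lift ord0 i') = i'.+1) // eqSS hi' mulr0.
have h0 : mu ord0 = 0.
  by move: h1; rewrite big_ord_recl big1 ?addr0 // => i _; rewrite hl.
by move=> j; case: (unliftP ord0 j) => [i ->|->].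
Qed.

Lemma theta_ge (R : realType) n : (0 < n)%N -> Num.sqrt (n.+1%:R : R) / 2 <= theta R n.
Proof.
move=> n1; rewrite /theta; apply: lb_le_inf.
  by exists (proj_norm (@S0 R n)), (@S0 R n); split; [exact: S0_ball | split; [exact: S0_nd|]].
by move=> p [S [hb [nd ->]]]; exact: proj_ge.
Qed.

Lemma c_pos (R : realType) : 0 < c_const R.
Proof.
rewrite /c_const; apply: divr_gt0; first by apply: powR_gt0; exact: pi_gt0.
apply: mulr_gt0; last by apply: powR_gt0.
rewrite sqrtr_gt0; apply: mulr_gt0 => //; exact: expR_gt0.
Qed.

Lemma c_lt (R : realType) : c_const R < 1 / 2.
Proof.
rewrite /c_const.
have ha : pi `^ (3^-1) < (2 : R).
  have -> : (2 : R) = 8 `^ (3^-1).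
    rewrite (_ : (8 : R) = 2 `^ (3%:R)); last by rewrite powR_mulrn // !exprS expr0 mulr1; lra.
    by rewrite -powRrM mulfV // powRr1.
  have p0 := @pi_ge0 R; have p4 := @pihalf_lt2 R.
  apply: gt0_ltr_powR; rewrite ?invr_gt0 ?qualifE //=; lra.
have hb : (4 : R) <= Num.sqrt (12 * expR 1).
  have e2 : (2 : R) <= expR 1 by have := expR_ge1Dx (1 : R); lra.
  rewrite (_ : (4 : R) = Num.sqrt (4 ^+ 2)); last by rewrite sqrtr_sqr ger0_norm.
  by rewrite ler_sqrt; lra.
have hd : (1 : R) <= 3 `^ (6^-1).
  have h3 : (1:R) <= 3 by lra.
  have := @ler_powR R 3 h3 0 (6^-1); rewrite powRr0; apply; rewrite invr_ge0; lra.
have hp : 0 <= pi `^ (3^-1) :> R by exact: powR_ge0.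
set a := pi `^ _ in ha hp *; set b := Num.sqrt _ in hb *; set d := 3 `^ _ in hd *.
have hbd : 4 <= b * d by nra.
rewrite ltr_pdivrMr; last lra.
nra.
Qed.

Theorem theorem2 (R : realType) :
  (exists c : R, 0 < c /\ forall n : nat, (1 <= n)%N -> c * Num.sqrt n%:R < theta R n)
  /\ 0 < c_const R
  /\ forall n : nat, (1 <= n)%N -> c_const R * Num.sqrt n%:R < theta R n.
Proof.
have hc0 := c_pos R; have hc := c_lt R.
have key : forall n : nat, (1 <= n)%N -> c_const R * Num.sqrt n%:R < theta R n.
  move=> n n1; apply: (lt_le_trans _ (theta_ge R n n1)).
  have h1 : Num.sqrt (n%:R : R) < Num.sqrt (n.+1%:R).
    by rewrite ltr_sqrt ?ltr0n // ltr_nat.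
  have h2 : 0 <= Num.sqrt (n%:R : R) by exact: sqrtr_ge0.
  nra.
split; last by split.
by exists (c_const R); split.
Qed.
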